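(* Let $F(\mathcal A)$ be a free group on a finite set $\mathcal A$, let $\psi$ be an automorphism of $F(\mathcal A)$, and let $\Gamma=F(\mathcal A)\rtimes_{(\psi)}F(s,t)$, where $F(s,t)$ is free on $s,t$ and both $s$ and $t$ act by $\psi$ (i.e. $sas^{-1}=tat^{-1}=\psi(a)$). Let $P\colon\mathbb N\to\mathbb N$ be an increasing function such that $d_{\mathcal A}(1,\psi^n(a))\le P(|n|)$ for all $a\in\mathcal A$ and $n\in\mathbb Z$. Then the length function $L$ of the combing $\sigma^{F(s,t)}\cdot\sigma^{F(\mathcal A)}$ of $\Gamma$ satisfies $L(n)\le nP(n)+n$ for all $n$.
   Context: Every $\gamma\in\Gamma$ is uniquely $\gamma=u\cdot g$ with $u\in F(s,t)$, $g\in F(\mathcal A)$. The combing $\sigma^{F(s,t)}\cdot\sigma^{F(\mathcal A)}$ assigns to $\gamma$ the word $\sigma_\gamma$ obtained by concatenating the freely reduced word in $\{s,t\}^{\pm}$ representing $u$ with the freely reduced word in $\mathcal A^{\pm}$ representing $g$. Its length is $L(n)=\max\{|\sigma_\gamma|: d_{\mathcal A\cup\{s,t\}}(1,\gamma)\le n\}$, where $|\sigma_\gamma|$ is the word length of $\sigma_\gamma$ and $d_{\mathcal A\cup\{s,t\}}$, $d_{\mathcal A}$ are word metrics. *)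

(* Defs.v *)
(* Free groups are modelled by freely reduced words. *)
From mathcomp Require Import all_boot all_order all_algebra.
Set Implicit Arguments. Unset Strict Implicit. Unset Printing Implicit Defensive.
Import GRing.Theory Num.Theory.

(* A letter of the alphabet T^{+-}: (x, false) is x, (x, true) is x^{-1}. *)
Definition inv_letter (T : eqType) (x : T * bool) : T * bool := (x.1, ~~ x.2).

Definition reduce (T : eqType) (w : seq (T * bool)) : seq (T * bool) :=
  foldr (fun x r => match r with
                    | y :: r' => if y == inv_letter x then r' else x :: r
                    | [::] => [:: x] end) [::] w.

Definition fmul (T : eqType) (u v : seq (T * bool)) := reduce (u ++ v).
Definition finv (T : eqType) (u : seq (T * bool)) := rev (map (@inv_letter T) u).

Definition ext_hom (A : eqType) (f : A -> seq (A * bool)) (w : seq (A * bool)) :=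
  reduce (flatten (map (fun x => if x.2 then finv (f x.1) else f x.1) w)).

Definition is_aut_pair (A : eqType) (f g : A -> seq (A * bool)) : Prop :=
  (forall a, ext_hom g (ext_hom f [:: (a, false)]) = [:: (a, false)]) /\
  (forall a, ext_hom f (ext_hom g [:: (a, false)]) = [:: (a, false)]).

Definition psi_pow (A : eqType) (f g : A -> seq (A * bool)) (n : int)
    (w : seq (A * bool)) : seq (A * bool) :=
  match n with
  | Posz m => iter m (ext_hom f) (reduce w)
  | Negz m => iter m.+1 (ext_hom g) (reduce w)
  end.

(* F(s,t): letters are bools (false = s, true = t). Exponent sum. *)
Definition exp_sum (u : seq (bool * bool)) : int :=
  (\sum_(x <- u) (if x.2 then -1 else 1))%R.

(* Gamma = F(A) x| F(s,t); the element (u, g) stands for u * g with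
   u in F(s,t), g in F(A).  Since s a s^-1 = t a t^-1 = psi(a),
   g * u = u * psi^(-exp_sum u)(g), hence
   (u1 g1)(u2 g2) = (u1 u2) (psi^(-exp_sum u2)(g1) g2). *)
Definition Gamma (A : eqType) := (seq (bool * bool) * seq (A * bool))%type.

Definition gmul (A : eqType) (f g : A -> seq (A * bool)) (x y : Gamma A) : Gamma A :=
  (fmul x.1 y.1, fmul (psi_pow f g (- exp_sum y.1)%R x.2) y.2).

Definition gone (A : eqType) : Gamma A := ([::], [::]).

Definition gen_elt (A : eqType) (l : (A + bool) * bool) : Gamma A :=
  match l.1 with
  | inl a => ([::], [:: (a, l.2)])
  | inr c => ([:: (c, l.2)], [::])
  end.

Definition eval_word (A : eqType) (f g : A -> seq (A * bool))
    (w : seq ((A + bool) * bool)) : Gamma A :=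
  foldl (fun acc l => gmul f g acc (gen_elt l)) (gone A) w.

Definition distG_le (A : eqType) (f g : A -> seq (A * bool)) (gam : Gamma A) (n : nat) :=
  exists w : seq ((A + bool) * bool), size w <= n /\ eval_word f g w = gam.

Definition distA_le (A : eqType) (x : seq (A * bool)) (n : nat) :=
  exists w : seq (A * bool), size w <= n /\ reduce w = x.

Definition comb_len (A : eqType) (gam : Gamma A) : nat :=
  size (reduce gam.1) + size (reduce gam.2).

(* Main.v *)
Require Import Defs.
From mathcomp Require Import all_boot all_order all_algebra.
From mathcomp Require Import zify.
Set Implicit Arguments. Unset Strict Implicit. Unset Printing Implicit Defensive.
Import GRing.Theory Num.Theory.
Local Notation finv := Defs.finv.

Section FreeRed.
Variable T : eqType.
Implicit Types (x y : T * bool) (a b c w u v r z : seq (T * bool)).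

Definition stp x r : seq (T * bool) := match r with
                    | y :: r' => if y == inv_letter x then r' else x :: r
                    | [::] => [:: x] end.

Lemma reduceE w : reduce w = foldr stp [::] w.
Proof. by []. Qed.

Lemma inv_inv x : inv_letter (inv_letter x) = x.
Proof. by case: x => a b; rewrite /inv_letter /= negbK. Qed.

Fixpoint reducedb w := match w with
  | x :: ((y :: _) as r) => (y != inv_letter x) && reducedb r
  | _ => true end.

Lemma reducedb_tail x w : reducedb (x :: w) -> reducedb w.
Proof. by case: w => //= y w /andP[]. Qed.

Lemma stp_reduced x r : reducedb r -> reducedb (stp x r).
Proof.
case: r => [|y r] //= H.
case: ifP => E; first exact: reducedb_tail H.
by rewrite /= E H.
Qed.

Lemma foldr_stp_reduced r u : reducedb r -> reducedb (foldr stp r u).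
Proof. by move=> Hr; elim: u => //= x u IH; apply: stp_reduced. Qed.

Lemma reduce_reduced w : reducedb (reduce w).
Proof. by rewrite reduceE; apply: foldr_stp_reduced. Qed.

Lemma reduce_id w : reducedb w -> reduce w = w.
Proof.
elim: w => // x w IH Hw.
rewrite reduceE /= -reduceE IH; last exact: reducedb_tail Hw.
case: w Hw {IH} => //= y w /andP[H1 _].
by rewrite (negbTE H1).
Qed.

Lemma reduceK w : reduce (reduce w) = reduce w.
Proof. exact/reduce_id/reduce_reduced. Qed.

Lemma stp_cancel x z : reducedb z -> stp x (stp (inv_letter x) z) = z.
Proof.
case: z => [|y z] /=; first by rewrite eqxx.
rewrite inv_inv => Hz.
case: ifP => E.
  move/eqP: E => Eyx; subst y.
  case: z Hz => [|y' z] //= /andP[H1 _].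
  by rewrite (negbTE H1).
by rewrite /= eqxx.
Qed.

Lemma stp_foldr x r v : reducedb r ->
  stp x (foldr stp r v) = foldr stp r (stp x v).
Proof.
move=> Hr; case: v => [|y v] //=.
case: ifP => E //=.
move/eqP: E => ->.
by rewrite stp_cancel //; apply: foldr_stp_reduced.
Qed.

Lemma foldr_stp_reduce r u : reducedb r -> foldr stp r u = foldr stp r (reduce u).
Proof.
move=> Hr; elim: u => //= x u IH.
by rewrite IH stp_foldr.
Qed.

Lemma reduce_cat u v : reduce (u ++ v) = foldr stp (reduce v) u.
Proof. by rewrite reduceE foldr_cat. Qed.

Lemma reduceCC u v : reduce (u ++ v) = reduce (reduce u ++ reduce v).
Proof.
rewrite !reduce_cat reduceK [RHS](foldr_stp_reduce _ (reduce_reduced v)) reduceK.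
by rewrite -foldr_stp_reduce // reduce_reduced.
Qed.

Lemma reduceCl u v : reduce (reduce u ++ v) = reduce (u ++ v).
Proof. by rewrite [RHS]reduceCC reduceCC reduceK. Qed.

Lemma reduceCr u v : reduce (u ++ reduce v) = reduce (u ++ v).
Proof. by rewrite [RHS]reduceCC reduceCC reduceK. Qed.

Lemma size_stp x r : size (stp x r) <= (size r).+1.
Proof. case: r => //= y r; case: ifP => //= _; lia. Qed.

Lemma size_reduce w : size (reduce w) <= size w.
Proof.
elim: w => //= x w IH; rewrite reduceE /= -reduceE.
by apply: leq_trans (size_stp _ _) _.
Qed.

Lemma finv_cons x w : finv (x :: w) = finv w ++ [:: inv_letter x].
Proof. by rewrite /finv /= rev_cons cats1. Qed.

Lemma finvK w : finv (finv w) = w.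
Proof.
rewrite /finv map_rev revK -map_comp.
by rewrite (eq_map (g := id)) ?map_id // => x /=; rewrite inv_inv.
Qed.

Lemma size_finv w : size (finv w) = size w.
Proof. by rewrite /finv size_rev size_map. Qed.

Lemma reduce_finv_l w : reduce (finv w ++ w) = [::].
Proof.
elim: w => // x w IH.
rewrite finv_cons -catA -reduceCr.
have -> : reduce ([:: inv_letter x] ++ x :: w) = reduce w.
  rewrite reduceE /= -reduceE.
  by rewrite -{2}(inv_inv x) stp_cancel // reduce_reduced.
by rewrite reduceCr.
Qed.

Lemma reduce_finv_r w : reduce (w ++ finv w) = [::].
Proof. by rewrite -{1}(finvK w) reduce_finv_l. Qed.

Lemma reduce_assoc a b c : reduce (a ++ b ++ c) = reduce (reduce (a ++ b) ++ c).
Proof. by rewrite catA reduceCl. Qed.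

Lemma inv_unique a b : reducedb a -> reduce (a ++ b) = [::] -> a = reduce (finv b).
Proof.
move=> Ha H.
rewrite -(reduce_id Ha) -[a]cats0 -(reduce_finv_r b) reduceCr reduce_assoc H.
by [].
Qed.

End FreeRed.

Section Hom.
Variable A : eqType.
Implicit Types (h k : A -> seq (A * bool)) (w u v : seq (A * bool)).

Definition img h (x : A * bool) := if x.2 then finv (h x.1) else h x.1.

Lemma ext_homE h w : ext_hom h w = reduce (flatten (map (img h) w)).
Proof. by []. Qed.

Lemma ext_hom_cat h u v : ext_hom h (u ++ v) = reduce (ext_hom h u ++ ext_hom h v).
Proof. by rewrite !ext_homE map_cat flatten_cat reduceCC. Qed.

Lemma ext_hom_cons h x w : ext_hom h (x :: w) = reduce (img h x ++ ext_hom h w).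
Proof. by rewrite !ext_homE /= reduceCr. Qed.

Lemma ext_hom_reduced h w : reduce (ext_hom h w) = ext_hom h w.
Proof. by rewrite ext_homE reduceK. Qed.

Lemma img_inv h x : reduce (img h x ++ img h (inv_letter x)) = [::].
Proof.
case: x => a [|]; rewrite /img /inv_letter /=.
  by rewrite -{2}(finvK (h a)) reduce_finv_r.
exact: reduce_finv_r.
Qed.

Lemma ext_hom_stp h x r : ext_hom h (stp x r) = reduce (img h x ++ ext_hom h r).
Proof.
case: r => [|y r] /=; first by rewrite ext_hom_cons.
case: ifP => E; last by rewrite ext_hom_cons.
move/eqP: E => ->.
by rewrite ext_hom_cons reduceCr reduce_assoc img_inv /= ext_hom_reduced.
Qed.

Lemma ext_hom_reduce h w : ext_hom h (reduce w) = ext_hom h w.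
Proof.
elim: w => // x w IH.
by rewrite reduceE /= -reduceE ext_hom_stp IH ext_hom_cons.
Qed.

Lemma ext_hom_finv h w : ext_hom h (finv w) = reduce (finv (ext_hom h w)).
Proof.
apply: inv_unique; first by rewrite -ext_hom_reduced reduce_reduced.
by rewrite -ext_hom_cat -ext_hom_reduce reduce_finv_l.
Qed.

Lemma ext_hom_comp h k :
  (forall a, ext_hom k (ext_hom h [:: (a, false)]) = [:: (a, false)]) ->
  forall w, ext_hom k (ext_hom h w) = reduce w.
Proof.
move=> H.
have Hl : forall x, ext_hom k (ext_hom h [:: x]) = [:: x].
  case=> a [|]; last exact: H.
  have -> : [:: (a, true)] = finv [:: (a, false)] by [].
  by rewrite ext_hom_finv ext_hom_reduce ext_hom_finv H.
elim=> // x w IH.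
rewrite -cat1s ext_hom_cat ext_hom_reduce ext_hom_cat Hl IH.
by rewrite reduceCr.
Qed.

End Hom.

Section Main.
Variable A : eqType.
Variables f g : A -> seq (A * bool).
Hypothesis Haut : is_aut_pair f g.

Local Notation F := (ext_hom f).
Local Notation G := (ext_hom g).

Lemma GF w : G (F w) = reduce w.
Proof. by apply: ext_hom_comp; case: Haut. Qed.
Lemma FG w : F (G w) = reduce w.
Proof. by apply: ext_hom_comp; case: Haut. Qed.

Lemma psi_reduced j w : reduce (psi_pow f g j w) = psi_pow f g j w.
Proof.
case: j => [[|m]|m] /=; first exact: reduceK.
  by rewrite ext_hom_reduced.
by rewrite ext_hom_reduced.
Qed.

Lemma psi_succ j w : F (psi_pow f g j w) = psi_pow f g (j + 1)%R w.
Proof.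
case: j => [m|[|m]].
- have -> : (Posz m + 1 = Posz m.+1)%R by lia.
  by [].
- have -> : (Negz 0 + 1 = Posz 0)%R by lia.
  by rewrite /= FG reduceK.
- have -> : (Negz m.+1 + 1 = Negz m)%R by lia.
  rewrite /= FG.
  by have := psi_reduced (Negz m) w.
Qed.

Lemma psi_pred j w : G (psi_pow f g j w) = psi_pow f g (j - 1)%R w.
Proof.
case: j => [[|m]|m].
- have -> : (Posz 0 - 1 = Negz 0)%R by lia.
  by [].
- have -> : (Posz m.+1 - 1 = Posz m)%R by lia.
  by rewrite /= GF; exact: (psi_reduced (Posz m) w).
- have -> : (Negz m - 1 = Negz m.+1)%R by lia.
  by [].
Qed.

Lemma psi0 w : psi_pow f g 0%R w = reduce w.
Proof. by []. Qed.

Definition piece (p : int * (A * bool)) :=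
  if p.2.2 then finv (psi_pow f g p.1 [:: (p.2.1, false)])
  else psi_pow f g p.1 [:: (p.2.1, false)].

Lemma piece_succ p : reduce (F (piece p)) = reduce (piece ((p.1 + 1)%R, p.2)).
Proof.
rewrite /piece /=; case: p.2.2.
  by rewrite ext_hom_finv reduceK psi_succ.
by rewrite psi_succ.
Qed.

Lemma piece_pred p : reduce (G (piece p)) = reduce (piece ((p.1 - 1)%R, p.2)).
Proof.
rewrite /piece /=; case: p.2.2.
  by rewrite ext_hom_finv reduceK psi_pred.
by rewrite psi_pred.
Qed.

Lemma hom_flatten h (L : seq (int * (A * bool))) :
  ext_hom h (flatten (map piece L)) = reduce (flatten (map (ext_hom h \o piece) L)).
Proof.
elim: L => // p L IH.
by rewrite /= ext_hom_cat IH reduceCr.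
Qed.

Lemma flatten_congr (B : Type) (F1 F2 : B -> seq (A * bool)) (L : seq B) :
  (forall p, reduce (F1 p) = reduce (F2 p)) ->
  reduce (flatten (map F1 L)) = reduce (flatten (map F2 L)).
Proof.
move=> H; elim: L => // p L IH.
by rewrite /= reduceCC IH H -reduceCC.
Qed.

Lemma eval_rcons w l :
  eval_word f g (rcons w l) = gmul f g (eval_word f g w) (gen_elt l).
Proof. by rewrite /eval_word foldl_rcons. Qed.

Lemma inv_ok w : exists c k (L : seq (int * (A * bool))),
  [/\ c + k <= size w, size (reduce (eval_word f g w).1) <= c, size L = k,
      all (fun p => `|p.1|%N <= c) L &
      reduce (eval_word f g w).2 = reduce (flatten (map piece L))].
Proof.
elim/last_ind: w => [|w l [c [k [L [H1 H2 H3 H4 H5]]]]].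
  by exists 0, 0, [::].
rewrite eval_rcons.
case: (eval_word f g w) H2 H5 => u gg /= H2 H5.
case: l => [[a|cc] b]; rewrite /gmul /gen_elt /=.
- exists c, k.+1, (rcons L (Posz 0, (a, b))).
  split.
  + rewrite size_rcons; lia.
  + by rewrite /fmul cats0 reduceK.
  + by rewrite size_rcons H3.
  + by rewrite all_rcons H4 andbT.
  + rewrite /exp_sum big_nil oppr0 psi0 /fmul reduceK H5 reduceCl.
    rewrite -cats1 map_cat flatten_cat /= cats0.
    by case: b.
- have Hu : size (reduce (fmul u [:: (cc, b)])) <= c.+1.
    rewrite /fmul reduceK -reduceCl.
    apply: leq_trans (size_reduce _) _.
    by rewrite size_cat /=; lia.
  rewrite /exp_sum big_seq1 /=.
  case: b Hu => Hu.
  + exists c.+1, k, (map (fun p => ((p.1 + 1)%R, p.2)) L).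
    split.
    * rewrite size_rcons; lia.
    * exact: Hu.
    * by rewrite size_map.
    * rewrite all_map; apply/allP => p Hp /=.
      move/allP: H4 => /(_ p Hp) /=; lia.
    * rewrite opprK /fmul cats0 reduceK.
      have -> : psi_pow f g 1%R gg = F (psi_pow f g 0%R gg).
        by rewrite psi_succ add0r.
      rewrite psi0 ext_hom_reduced ext_hom_reduce -ext_hom_reduce H5 ext_hom_reduce.
      rewrite hom_flatten -map_comp.
      by apply: flatten_congr => p /=; rewrite piece_succ.
  + exists c.+1, k, (map (fun p => ((p.1 - 1)%R, p.2)) L).
    split.
    * rewrite size_rcons; lia.
    * exact: Hu.
    * by rewrite size_map.
    * rewrite all_map; apply/allP => p Hp /=.
      move/allP: H4 => /(_ p Hp) /=; lia.
    * rewrite /fmul cats0 reduceK.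
      have -> : psi_pow f g (-1)%R gg = G (psi_pow f g 0%R gg).
        by rewrite psi_pred sub0r.
      rewrite psi0 ext_hom_reduced ext_hom_reduce -ext_hom_reduce H5 ext_hom_reduce.
      rewrite hom_flatten -map_comp.
      by apply: flatten_congr => p /=; rewrite piece_pred.
Qed.

End Main.

Theorem proposition3p14 (A : finType) (f g : A -> seq (A * bool)) (P : nat -> nat) :
  is_aut_pair f g ->
  {homo P : m n / m <= n} ->
  (forall (a : A) (k : int), distA_le (psi_pow f g k [:: (a, false)]) (P `|k|%N)) ->
  forall (n : nat) (gam : Gamma A), distG_le f g gam n ->
    comb_len gam <= n * P n + n.
Proof.
move=> Haut HP Hd n gam [w [Hw <-]].
have [c [k [L [H1 H2 H3 H4 H5]]]] := inv_ok Haut w.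
rewrite /comb_len H5.
have Hpc : forall p, p \in L -> size (piece f g p) <= P c.
  move=> p Hp; move/allP: H4 => /(_ p Hp) Hj.
  have [w' [Hs Hr]] := Hd p.2.1 p.1.
  have Hsz : size (psi_pow f g p.1 [:: (p.2.1, false)]) <= P c.
    rewrite -Hr; apply: leq_trans (size_reduce _) _.
    by apply: leq_trans Hs _; apply: HP.
  by rewrite /piece; case: p.2.2; rewrite ?size_finv.
have Hfl : size (flatten (map (piece f g) L)) <= size L * P c.
  elim: L Hpc {H1 H3 H4 H5} => // p L IH Hpc.
  rewrite /= size_cat mulSn leq_add //.
    by apply: Hpc; rewrite inE eqxx.
  by apply: IH => q Hq; apply: Hpc; rewrite inE Hq orbT.
have Hcn : c <= n by lia.
have HPc : P c <= P n by apply: HP.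
have Hsz := leq_trans (size_reduce _) Hfl.
rewrite H3 in Hsz.
have : k * P c <= n * P n by apply: leq_mul => //; lia.
lia.
Qed.
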